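(* Let $(G_n)$ be a tight sequence of finite connected graphs with bounded average degree (i.e. $\sup_n 2|E(G_n)|/|V(G_n)|<\infty$) such that $\lim_n |V(G_n)|^{-1}\log\tau(G_n)=h$. Let $G'_n$ be connected subgraphs of $G_n$ such that $$\lim_{n\to\infty}|V(G_n)|^{-1}\bigl|\{x\in V(G'_n):\deg_{G'_n}(x)=\deg_{G_n}(x)\}\bigr|=1.$$ Then $\lim_n |V(G'_n)|^{-1}\log\tau(G'_n)=h$.
   Context: $\tau(G)$ is the number of spanning trees of $G$. For $R>0$ and a finite graph $G$, $\nu_R(G)$ is the distribution of the number of edges in the ball of radius $R$ about a uniformly random vertex of $G$. A collection of finite graphs is tight if for each $R$ the collection of corresponding distributions $\nu_R(G)$ is tight. *)

(* Defs.v *)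
From HB Require Import structures.
From mathcomp Require Import all_boot all_order all_algebra.
From mathcomp Require Import all_classical all_reals all_analysis.
Set Implicit Arguments. Unset Strict Implicit. Unset Printing Implicit Defensive.
Import Order.TTheory GRing.Theory Num.Theory.

(* A finite (multi)graph: loops and multiple edges are allowed. *)
Record graph := Graph {
  gV : finType;
  gE : finType;
  ends : gE -> gV * gV }.

Section GraphDefs.
Variable G : graph.
Local Notation V := (gV G).
Local Notation E := (gE G).

Definition joins (e : E) (x y : V) : bool :=
  (ends e == (x, y)) || (ends e == (y, x)).

Definition adjF (F : {set E}) : rel V :=
  fun x y => [exists e in F, joins e x y].

Definition is_subgraph (S : {set V}) (F : {set E}) : Prop :=
  forall e, e \in F -> (ends e).1 \in S /\ (ends e).2 \in S.

Definition connected_sub (S : {set V}) (F : {set E}) : Prop :=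
  S != finset.set0 /\ forall x y, x \in S -> y \in S -> connect (adjF F) x y.

(* Loops are cycles of
   length 1, pairs of parallel edges are cycles of length 2. *)
Definition cycle_in (F : {set E}) (vs : seq V) (es : seq E) : Prop :=
  [/\ [&& 0 < size vs, size es == size vs, uniq vs & uniq es],
      all (fun e => e \in F) es &
      (forall (x0 : V) (e0 : E) i, i < size es ->
        joins (nth e0 es i) (nth x0 vs i) (nth x0 vs ((i.+1) %% size vs)))].

Definition acyclic (F : {set E}) : Prop :=
  ~ exists vs es, cycle_in F vs es.

Definition spanning_tree (S : {set V}) (F : {set E}) (T : {set E}) : Prop :=
  T \subset F /\ connected_sub S T /\ acyclic T.

Definition tau (S : {set V}) (F : {set E}) : nat :=
  #|[set T : {set E} | `[< spanning_tree S F T >]]|.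

(* degree in the subgraph with edge set F (a loop counts twice) *)
Definition deg (F : {set E}) (x : V) : nat :=
  #|[set e in F | (ends e).1 == x]| + #|[set e in F | (ends e).2 == x]|.

Fixpoint ball (R : nat) (x : V) : {set V} :=
  match R with
  | 0 => [set x]
  | R'.+1 => ball R' x :|: [set y | [exists z in ball R' x, adjF [set: E] z y]]
  end.

Definition ball_edges (R : nat) (x : V) : nat :=
  #|[set e : E | ((ends e).1 \in ball R x) && ((ends e).2 \in ball R x)]|.

Definition connected_graph : Prop := connected_sub [set: V] [set: E].

End GraphDefs.

(* Tightness of the sequence: for each R > 0 the laws nu_R(G n) of the
   number of edges in the ball of radius R about a uniform random vertex
   form a tight family of distributions on nat. *)
Definition tight (Rt : realType) (G : nat -> graph) : Prop :=
  forall R : nat, (0 < R)%N ->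
  forall eps : Rt, (0 < eps)%R ->
  exists M : nat, forall n,
    ((#|[set x : gV (G n) | (M < ball_edges R x)%N]|%:R : Rt)
       / (#|gV (G n)|%:R) < eps)%R.

(* Main.v *)
Require Import Defs.
From HB Require Import structures.
From mathcomp Require Import all_boot all_order all_algebra.
From mathcomp Require Import all_classical all_reals all_analysis.
Import Order.TTheory GRing.Theory Num.Theory.
Import numFieldNormedType.Exports.
Set Implicit Arguments. Unset Strict Implicit. Unset Printing Implicit Defensive.
Local Notation subsetP := fintype.subsetP.
Local Notation groot := fingraph.root.
Local Notation setDDl := finset.setDDl.
Local Notation setUC := finset.setUC.
Local Notation subsetUr := finset.subsetUr.
Local Notation subsetUl := finset.subsetUl.
Local Notation setDv := finset.setDv.
Local Notation setD1K := finset.setD1K.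
Local Notation setD_eq0 := finset.setD_eq0.
Local Notation eqEsubset := finset.eqEsubset.
Local Notation subUset := finset.subUset.
Local Notation sub1set := finset.sub1set.
Local Notation sub0set := finset.sub0set.
Local Notation setDE := finset.setDE.
Local Notation setUS := finset.setUS.
Local Notation setSU := finset.setSU.
Local Notation setIS := finset.setIS.
Local Notation setSI := finset.setSI.
Local Notation subsetIl := finset.subsetIl.
Local Notation subsetIr := finset.subsetIr.
Local Notation setIC := finset.setIC.
Local Notation setUA := finset.setUA.
Local Notation subset_trans := fintype.subset_trans.
Local Notation setIidPr := finset.setIidPr.
Local Notation setIidPl := finset.setIidPl.
Local Notation setUidPr := finset.setUidPr.
Local Notation setCS := finset.setCS.
Local Notation cardsX := finset.cardsX.
Local Notation setDDr := finset.setDDr.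
Local Notation properE := fintype.properE.
Local Notation setX := finset.setX.
Local Notation set0U := finset.set0U.
Local Notation setP := finset.setP.
Local Notation subsetT := finset.subsetT.
Local Notation in_setT := finset.in_setT.
Local Notation setU0 := finset.setU0.
Local Notation setIT := finset.setIT.
Local Notation setTI := finset.setTI.
Local Notation setD0 := finset.setD0.
Local Notation setDT := finset.setDT.
From mathcomp Require Import ring lra.
Section GT.
Variable G : graph.
Local Notation V := (gV G).
Local Notation E := (gE G).

Lemma joinsC (e : E) x y : joins e x y = joins e y x.
Proof. by rewrite /joins orbC. Qed.

Lemma joins_ends (e : E) : joins e (ends e).1 (ends e).2.
Proof. by rewrite /joins -surjective_pairing eqxx. Qed.

Lemma adjF_sym (X : {set E}) : symmetric (adjF X).
Proof.
move=> x y; rewrite /adjF; apply/existsP/existsP => -[e He]; exists e;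
  by rewrite joinsC.
Qed.

Lemma csym (X : {set E}) : connect_sym (adjF X).
Proof. exact/sym_connect_sym/adjF_sym. Qed.

Lemma adjF_sub (X Y : {set E}) : X \subset Y -> subrel (adjF X) (adjF Y).
Proof.
move=> sXY x y /existsP[e /andP[eX j]]; apply/existsP; exists e.
by rewrite (subsetP sXY _ eX).
Qed.

Lemma connect_subX (X Y : {set E}) x y : X \subset Y ->
  connect (adjF X) x y -> connect (adjF Y) x y.
Proof.
move=> sXY; apply: connect_sub => a b /(adjF_sub sXY) ab; exact: connect1.
Qed.

Lemma adjF_edge (X : {set E}) e : e \in X -> adjF X (ends e).1 (ends e).2.
Proof. by move=> eX; apply/existsP; exists e; rewrite eX joins_ends. Qed.

Definition kappa (X : {set E}) := #|[set groot (adjF X) x | x : V]|.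

Lemma kappa_merge (X : {set E}) e :
  ~~ connect (adjF X) (ends e).1 (ends e).2 -> kappa (e |: X) < kappa X.
Proof.
move=> nc; rewrite /kappa.
set A := [set groot (adjF X) x | x : V].
have -> : [set groot (adjF (e |: X)) x | x : V] = groot (adjF (e |: X)) @: A.
  rewrite -imset_comp; apply: eq_imset => x /=.
  apply/eqP; rewrite root_connect; last exact: csym.
  apply: (connect_subX (finset.subsetUr _ _)).
  by [apply: connect_root | rewrite (csym X); apply: connect_root].
rewrite ltn_neqAle leq_imset_card andbT; apply/negP => /imset_injP inj.
have ru : groot (adjF X) (ends e).1 \in A by apply: imset_f.
have rv : groot (adjF X) (ends e).2 \in A by apply: imset_f.
have := inj _ _ ru rv; move/(_ _)/eqP; rewrite root_connect; last exact: csym.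
move=> H; move: nc; rewrite H //.
apply/eqP; rewrite root_connect; last exact: csym.
have c1 := connect_root (adjF X) (ends e).1.
have c2 := connect_root (adjF X) (ends e).2.
have h1 : connect (adjF (e |: X)) (groot (adjF X) (ends e).1) (ends e).1.
  by rewrite (csym (e |: X)); apply: (connect_subX (finset.subsetUr _ _) c1).
have h2 : connect (adjF (e |: X)) (ends e).1 (ends e).2.
  by apply: connect1; apply: adjF_edge; exact: setU11.
have h3 := connect_subX (finset.subsetUr [set e] X) c2.
exact: connect_trans (connect_trans h1 h2) h3.
Qed.

Lemma kappa_cover (X : {set E}) (P : {set V}) z :
  (forall x, connect (adjF X) x z \/ exists2 p, p \in P & connect (adjF X) x p) ->
  kappa X <= #|P|.+1.
Proof.
move=> cov; rewrite /kappa.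
have sub : [set groot (adjF X) x | x : V] \subset groot (adjF X) z |: (groot (adjF X) @: P).
  apply/subsetP => _ /imsetP[x _ ->]; rewrite in_setU1.
  case: (cov x) => [cxz | [p pP cxp]].
    have -> : groot (adjF X) x = groot (adjF X) z.
      by apply/eqP; rewrite (root_connect (csym X)).
    by rewrite eqxx.
  apply/orP; right; apply/imsetP; exists p => //; apply/eqP.
  by rewrite (root_connect (csym X)).
apply: (leq_trans (subset_leq_card sub)).
by rewrite cardsU1 /= -add1n leq_add ?leq_b1 ?leq_imset_card.
Qed.

Lemma kappa_pos (X : {set E}) (x : V) : 0 < kappa X.
Proof. by apply/card_gt0P; exists (groot (adjF X) x); apply: imset_f. Qed.

Lemma acyclic_sub (X Y : {set E}) : X \subset Y -> acyclic Y -> acyclic X.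
Proof.
move=> sXY aY [vs [es [H1 H2 H3]]]; apply: aY; exists vs, es; split=> //.
by apply: sub_all H2 => e /(subsetP sXY).
Qed.

End GT.

Section GT2.
Variable G : graph.
Local Notation V := (gV G).
Local Notation E := (gE G).

Lemma joins_eq (f : E) a b c d : joins f a b -> joins f c d ->
  (a = c /\ b = d) \/ (a = d /\ b = c).
Proof.
rewrite /joins => /orP[] /eqP -> /orP[] /eqP [] -> ->; tauto.
Qed.

Lemma acyclic_add (X : {set E}) e : acyclic X ->
  ~~ connect (adjF X) (ends e).1 (ends e).2 -> acyclic (e |: X).
Proof.
move=> aX nc [vs [es [/and4P[k0 /eqP szes uvs ues] allF jn]]].
case: (boolP (e \in es)) => ein; last first.
  apply: aX; exists vs, es; split; [by rewrite k0 szes eqxx uvs ues| |by []].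
  apply/allP => f fin; have := allP allF f fin; rewrite in_setU1.
  by case/orP => [/eqP fe|//]; move: ein; rewrite -fe fin.
set x0 := (ends e).1.
set i := index e es.
have ik : i < (size vs) by rewrite -szes index_mem.
have claim : forall j, j < (size vs) ->
    connect (adjF X) (nth x0 vs (i.+1 %% (size vs))) (nth x0 vs ((i.+1 + j) %% (size vs))).
  elim=> [|j IH] jk; first by rewrite addn0.
  have {IH} IH := IH (ltnW jk).
  set idx := (i.+1 + j) %% (size vs).
  have idxk : idx < (size vs) by rewrite ltn_pmod.
  have := jn x0 e idx; rewrite szes => /(_ idxk).
  have -> : idx.+1 %% (size vs) = (i.+1 + j.+1) %% (size vs).
    by rewrite -addn1 modnDml addn1 addnS.
  move=> jf; apply: (connect_trans IH); apply: connect1.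
  apply/existsP; exists (nth e es idx); rewrite jf andbT.
  have : nth e es idx \in e |: X by apply: (allP allF); rewrite mem_nth // szes.
  rewrite in_setU1 => /orP[/eqP hf|//].
  have : nth e es idx == nth e es i by rewrite hf nth_index.
  rewrite nth_uniq ?szes // /idx.
  have := eqn_modDl i j.+1 0 (size vs).
  by rewrite addn0 (modn_small ik) mod0n (modn_small jk) addnS -addSn => ->.
have := claim (size vs).-1; rewrite prednK //.
move=> /(_ (leqnn _)); rewrite addSn -addnS prednK // modnDr (modn_small ik) => c.
have := jn x0 e i; rewrite szes => /(_ ik); rewrite nth_index //.
move=> /(joins_eq (joins_ends e)) [[h1 h2]|[h1 h2]]; move: nc.
  by rewrite h1 h2 (csym X) c.
by rewrite h1 h2 c.
Qed.

End GT2.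

Section GT3.
Variable G : graph.
Local Notation V := (gV G).
Local Notation E := (gE G).

Lemma acyclic_rem (Z : {set E}) e : acyclic Z -> e \in Z ->
  ~~ connect (adjF (Z :\ e)) (ends e).1 (ends e).2.
Proof.
move=> aZ eZ; apply/negP => c.
set u := (ends e).1 in c; set v := (ends e).2 in c.
have je : joins e u v by apply: joins_ends.
case: (eqVneq u v) => [uv | uv].
  apply: aZ; exists [:: u], [:: e]; split => //=; first by rewrite eZ.
  by move=> x0 e0 [|i] //= _; move: je; rewrite -uv.
rewrite (csym (Z :\ e)) in c.
case/connectP: c => p0 pp0 lp0.
move: lp0; case: (shortenP pp0) => p pp up _ lp; clear pp0 p0.
pose pe a b := odflt e [pick f in Z :\ e | joins f a b].
have peP : forall a b, adjF (Z :\ e) a b -> pe a b \in Z :\ e /\ joins (pe a b) a b.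
  move=> a b /existsP[f /andP[fZ jf]]; rewrite /pe.
  by case: pickP => [g /andP[gZ jg]|/(_ f)] /=; [|rewrite fZ jf].
have pn : size p > 0.
  by case: p pp up lp => //= _ _ lp; move: uv; rewrite lp eqxx.
set es := rcons (pairmap pe v p) e.
have szes : size es = size (v :: p) by rewrite size_rcons size_pairmap.
have nthes : forall x0 e0 i, i < size p ->
   nth e0 es i = pe (nth x0 (v :: p) i) (nth x0 p i).
  move=> x0 e0 i ip; rewrite nth_rcons size_pairmap ip.
  by rewrite (set_nth_default e) ?size_pairmap // (nth_pairmap x0).
have adjp : forall x0 i, i < size p -> adjF (Z :\ e) (nth x0 (v :: p) i) (nth x0 p i).
  by move=> x0 i ip; apply: (pathP x0 pp).
apply: aZ; exists (v :: p), es; split.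
- rewrite szes eqxx up /= /es rcons_uniq.
  apply/andP; split.
    apply/negP => /(@nthP _ _ _ e) [i]; rewrite size_pairmap => ip.
    rewrite (nth_pairmap v) // => hi.
    by have [] := peP _ _ (adjp v i ip); rewrite hi setD11.
  apply/(uniqP e) => i j; rewrite !inE size_pairmap => ip jp.
  rewrite !(nth_pairmap v) // => hij.
  have [_ ji] := peP _ _ (adjp v i ip); have [_ jj] := peP _ _ (adjp v j jp).
  rewrite hij in ji.
  have nthS : forall k, k < size p -> nth v p k = nth v (v :: p) k.+1 by [].
  have ltS : forall k, k < size p -> k.+1 < size (v :: p) by [].
  have ltk : forall k, k < size p -> k < size (v :: p) by move=> k kp; apply: ltnW.
  have inj : forall a b, a < size (v :: p) -> b < size (v :: p) ->
      nth v (v :: p) a = nth v (v :: p) b -> a = b.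
    by move=> a b ha hb /eqP; rewrite nth_uniq // => /eqP.
  case: (joins_eq jj ji) => [[h1 h2]|[h1 h2]].
    by apply/esym/(inj _ _ (ltk _ jp) (ltk _ ip) h1).
  rewrite !nthS // in h1 h2.
  move: (inj _ _ (ltk _ jp) (ltS _ ip) h1) (inj _ _ (ltS _ jp) (ltk _ ip) h2).
  by move=> -> /eqP; rewrite eq_sym (ltn_eqF (leqnSn i.+1)).
- rewrite /es all_rcons eZ /=; apply/allP => f /(@nthP _ _ _ e) [i]; rewrite size_pairmap => ip.
  rewrite (nth_pairmap v) // => <-.
  by have [/setD1P[]] := peP _ _ (adjp v i ip).
- move=> x0 e0 i; rewrite szes /= ltnS leq_eqVlt => /orP[/eqP ->|ip].
    rewrite modnn /es nth_rcons size_pairmap ltnn eqxx.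
    have -> : nth x0 (v :: p) (size p) = u.
      by rewrite lp -[size p]/((size (v :: p)).-1) nth_last.
    exact: je.
  rewrite (nthes x0) // modn_small ?ltnS //.
  by have [] := peP _ _ (adjp x0 i ip).
Qed.

End GT3.

Section GT4.
Variable G : graph.
Local Notation V := (gV G).
Local Notation E := (gE G).

Lemma card_setD_add (T X : {set E}) e : e \in T -> e \notin X ->
  #|T :\: X| = #|T :\: (e |: X)|.+1.
Proof.
move=> eT eX; rewrite (cardsD1 e (T :\: X)) inE eT eX /= add1n.
by rewrite setDDl setUC.
Qed.

Lemma acyc_size (Z X : {set E}) : acyclic Z -> X \subset Z ->
  #|Z :\: X| + kappa Z <= kappa X.
Proof.
have [n] := ubnP #|Z :\: X|; elim: n Z => // n IH Z szn aZ sXZ.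
case: (set_0Vmem (Z :\: X)) => [e0 | [e]].
  have -> : Z = X by apply/eqP; rewrite eqEsubset sXZ andbT -setD_eq0 e0.
  by rewrite setDv cards0.
rewrite inE => /andP[eX eZ].
have aZ' : acyclic (Z :\ e) by apply: acyclic_sub aZ; apply: subD1set.
have sXZ' : X \subset Z :\ e.
  by apply/subsetP => x xX; rewrite !inE (subsetP sXZ _ xX) andbT; apply: contraNneq eX => <-.
have cZ : #|Z :\: X| = #|(Z :\ e) :\: X|.+1.
  rewrite (card_setD_add eZ eX); congr (#|_|.+1).
  by rewrite setDDl setUC.
rewrite cZ in szn.
have {IH} IH := IH (Z :\ e) szn aZ' sXZ'.
have km := kappa_merge (acyclic_rem aZ eZ).
rewrite setD1K // in km.
by rewrite cZ addSn; apply: leq_trans IH; rewrite -addnS leq_add2l.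
Qed.

Lemma acyclic0 : acyclic (finset.set0 : {set E}).
Proof.
move=> [vs [[|f es] [/and4P[k0 /eqP sz _ _] /= H _]]].
  by move: k0; rewrite -sz.
by move: H; rewrite inE.
Qed.

Lemma extend (S : {set V}) (F X : {set E}) : connected_sub S F ->
  X \subset F -> acyclic X ->
  exists T, [/\ spanning_tree S F T, X \subset T & #|T :\: X| + kappa T <= kappa X].
Proof.
move=> [S0 cF].
have [n] := ubnP #|F :\: X|; elim: n X => // n IH X szn sXF aX.
case: (boolP [exists e in F :\: X, ~~ connect (adjF X) (ends e).1 (ends e).2]).
  case/existsP => e /andP[]; rewrite inE => /andP[eX eF] nc.
  have aX' := acyclic_add aX nc.
  have sXF' : e |: X \subset F by rewrite subUset sub1set eF sXF.
  have szn' : #|F :\: (e |: X)| < n.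
    by move: szn; rewrite (card_setD_add eF eX).
  have [T [sT sXT szT]] := IH _ szn' sXF' aX'.
  exists T; split => //.
    by apply: subset_trans sXT; apply: subsetUr.
  have eT : e \in T by apply: (subsetP sXT); apply: setU11.
  rewrite (card_setD_add eT eX) addSn.
  exact: leq_ltn_trans szT (kappa_merge nc).
rewrite negb_exists => /forallP nc.
exists X; split => //; last by rewrite setDv cards0.
split => //; split => //; split => // x y xS yS.
apply: connect_sub (cF x y xS yS) => a b /existsP[f /andP[fF jf]].
case: (boolP (f \in X)) => fX.
  by apply: connect1; apply/existsP; exists f; rewrite fX.
have := nc f; rewrite inE fX fF /= negbK => c.
case: (joins_eq (joins_ends f) jf) => [[<- <-]|[<- <-]] //.
by rewrite (csym X).
Qed.

Lemma tau_gt0 (S : {set V}) (F : {set E}) : connected_sub S F -> 0 < tau S F.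
Proof.
move=> cSF; have [T [sT _ _]] := extend cSF (sub0set F) acyclic0.
by apply/card_gt0P; exists T; rewrite inE; apply/asboolP.
Qed.

End GT4.

Section GT5.
Variable G : graph.
Local Notation V := (gV G).
Local Notation E := (gE G).

Definition Kset (b : nat) := [set D : {set E} | #|D| <= b].
Definition good (S : {set V}) (F : {set E}) :=
  [set x in S | deg F x == deg [set: E] x].

Lemma good_edge S F x e : x \in good S F ->
  ((ends e).1 == x) || ((ends e).2 == x) -> e \in F.
Proof.
rewrite inE => /andP[_ /eqP]; rewrite /deg => hd he.
apply/negPn/negP => eF.
set F1 := [set e in F | (ends e).1 == x]; set F2 := [set e in F | (ends e).2 == x].
set T1 := [set e in [set: E] | (ends e).1 == x]; set T2 := [set e in [set: E] | (ends e).2 == x].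
have s1 : F1 \subset T1 by apply/subsetP => f; rewrite !inE => /andP[_ ->].
have s2 : F2 \subset T2 by apply/subsetP => f; rewrite !inE => /andP[_ ->].
have l1 := subset_leq_card s1; have l2 := subset_leq_card s2.
case/orP: he => he.
  have : F1 \proper T1.
    rewrite properE s1 /=; apply/negP => /subsetP/(_ e); rewrite !inE he (negbTE eF).
    by move=> /(_ isT).
  move/proper_card => lt; move: hd; apply/eqP; rewrite neq_ltn.
  by rewrite (leq_ltn_trans (leq_add (leqnn _) l2)) // ltn_add2r.
have : F2 \proper T2.
  rewrite properE s2 /=; apply/negP => /subsetP/(_ e); rewrite !inE he (negbTE eF).
  by move=> /(_ isT).
move/proper_card => lt; move: hd; apply/eqP; rewrite neq_ltn.
by rewrite (leq_ltn_trans (leq_add l1 (leqnn _))) // ltn_add2l.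
Qed.

Definition trees (S : {set V}) (F : {set E}) := [set T : {set E} | `[< spanning_tree S F T >]].

Lemma treesP S F T : reflect (spanning_tree S F T) (T \in trees S F).
Proof. by rewrite inE; apply: asboolP. Qed.

Lemma upper_count S F : connected_graph G -> connected_sub S F ->
  tau S F <= tau [set: V] [set: E] * #|Kset (#|~: good S F|)|.
Proof.
move=> cG cSF; set b := #|~: good S F|.
have [z zS] : exists z, z \in S by case: cSF => /set0Pn.
pose f (p : {set E} * {set E}) := p.1 :\: p.2.
have sub : trees S F \subset f @: setX (trees [set: V] [set: E]) (Kset b).
  apply/subsetP => T' /treesP [sT' [cT' aT']].
  have [T [sT sT'T szT]] := extend cG (subsetT T') aT'.
  apply/imsetP; exists (T, T :\: T').
    rewrite inE /=; apply/andP; split; first by apply/treesP.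
    rewrite inE /b.
    have kc : kappa T' <= #|~: S|.+1.
      apply: (kappa_cover (z := z)) => x.
      case: (boolP (x \in S)) => xS; first by left; case: cT' => _; apply.
      by right; exists x; rewrite ?inE.
    have kp := kappa_pos T z.
    have le1 : #|T :\: T'| <= #|~: S|.
      by rewrite -ltnS; apply: leq_trans kc; apply: leq_trans szT; rewrite -addn1 leq_add2l.
    apply: leq_trans le1 _; apply: subset_leq_card; rewrite setCS.
    by apply/subsetP => x; rewrite inE => /andP[].
  by rewrite /f /= setDDr setDv set0U; apply/esym/setIidPr.
rewrite /tau -/(trees S F) -/(trees _ _) -cardsX.
by apply: leq_trans (subset_leq_card sub) (leq_imset_card _ _).
Qed.

Lemma lower_count S F : connected_graph G -> connected_sub S F ->
  tau [set: V] [set: E] <= tau S F * (#|Kset (#|~: good S F|)| * #|Kset (#|~: good S F|)|).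
Proof.
move=> cG cSF; set b := #|~: good S F|.
have [z _] : exists z, z \in [set: V] by case: cG => /set0Pn.
pose g (p : {set E} * ({set E} * {set E})) := (p.1 :\: p.2.1) :|: p.2.2.
have sub : trees [set: V] [set: E] \subset
    g @: setX (trees S F) (setX (Kset b) (Kset b)).
  apply/subsetP => T /treesP [_ [cT aT]].
  set X := T :&: F.
  have sXT : X \subset T by apply: subsetIl.
  have aX : acyclic X by apply: acyclic_sub aT.
  have [T2 [sT2 sXT2 szT2]] := extend cSF (subsetIr T F) aX.
  have kc : kappa X <= b.+1.
    apply: (kappa_cover (z := z)) => x.
    case: (boolP [exists p in ~: good S F, connect (adjF X) x p]).
      by case/existsP => p /andP[pB cp]; right; exists p.
    rewrite negb_exists => /forallP ncB; left.
    set C := [set y | connect (adjF X) x y].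
    have step : forall a c, a \in C -> adjF T a c -> c \in C.
      move=> a c; rewrite !inE => ca /existsP[f /andP[fT jf]].
      have ag : a \in good S F.
        by have := ncB a; rewrite inE ca andbT negbK.
      have fF : f \in F.
        apply: (good_edge ag); move: jf; rewrite /joins.
        by case/orP => /eqP -> /=; rewrite eqxx ?orbT.
      apply: (connect_trans ca); apply: connect1; apply/existsP; exists f.
      by rewrite inE fT fF.
    have clC : fingraph.closed (adjF T) C.
      move=> a c ac; apply/idP/idP => h; first exact: step h ac.
      by apply: step h _; rewrite adjF_sym.
    have := closed_connect clC (cT.2 x z (in_setT x) (in_setT z)).
    by rewrite !inE connect0 => <-.
  have kp := kappa_pos T z.
  have kp2 := kappa_pos T2 z.
  have le1 : #|T :\: X| <= b.
    have := acyc_size aT sXT => h1.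
    by rewrite -ltnS; apply: leq_trans kc; apply: leq_trans h1; rewrite -addn1 leq_add2l.
  have le2 : #|T2 :\: X| <= b.
    by rewrite -ltnS; apply: leq_trans kc; apply: leq_trans szT2; rewrite -addn1 leq_add2l.
  apply/imsetP; exists (T2, (T2 :\: X, T :\: X)).
    by rewrite !inE /= le1 le2 !andbT; apply/asboolP.
  rewrite /g /= setDDr setDv set0U.
  rewrite (setIidPr sXT2).
  apply/setP => e; rewrite !inE.
  case: (boolP (e \in T)) => eT; case: (boolP (e \in F)) => eF //=.
rewrite /tau -/(trees S F) -/(trees _ _) -!cardsX.
by apply: leq_trans (subset_leq_card sub) (leq_imset_card _ _).
Qed.

End GT5.
Local Open Scope ring_scope.

Lemma sum_pow_card (R : comNzRingType) (T : finType) (t : R) :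
  \sum_(D : {set T}) t ^+ #|D| = (1 + t) ^+ #|T|.
Proof.
rewrite -[#|T|]/#|predT : pred T| -prodr_const.
have -> : \prod_(i in (predT : pred T)) (1 + t) =
    \prod_(i in (predT : pred T)) \sum_(b : bool) (if b then t else 1).
  by apply: eq_bigr => i _; rewrite big_bool addrC.
rewrite bigA_distr_bigA.
rewrite (reindex (fun D : {set T} => [ffun i => i \in D])) /=; last first.
  exists (fun f : {ffun T -> bool} => [set i | f i]) => [D _|f _].
    by apply/setP => i; rewrite inE ffunE.
  by apply/ffunP => i; rewrite ffunE inE.
apply: eq_bigr => D _; rewrite -prodr_const big_mkcond /=.
by apply: eq_bigr => i _; rewrite ffunE.
Qed.

Lemma Kset_bound (R : realFieldType) (G : graph) b (t : R) : 0 < t -> t <= 1 ->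
  (#|Kset G b|%:R * t ^+ b <= (1 + t) ^+ #|gE G|).
Proof.
move=> t0 t1; rewrite -sum_pow_card mulr_natl -sumr_const.
rewrite [X in _ <= X](bigID (fun D => D \in Kset G b)) /=.
rewrite -[X in X <= _]addr0 lerD //; last first.
  by apply: sumr_ge0 => D _; rewrite exprn_ge0 // ltW.
apply: ler_sum => D; rewrite inE => Db.
by apply: ler_wiXn2l => //; rewrite ltW.
Qed.
Local Open Scope ring_scope.

Lemma lnK_bound (R : realType) (Gr : graph) b (t : R) : 0 < t -> t <= 1 ->
  ln (#|Kset Gr b|%:R : R) <= #|gE Gr|%:R * t + b%:R * (- ln t).
Proof.
move=> t0 t1.
have Kp : (0 < #|Kset Gr b|)%N by apply/card_gt0P; exists finset.set0; rewrite inE cards0.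
have H := Kset_bound Gr b t0 t1.
have kpos : (0 : R) < #|Kset Gr b|%:R by rewrite ltr0n.
have tb : 0 < t ^+ b by rewrite exprn_gt0.
have t1p : 0 < 1 + t by rewrite addr_gt0.
have kt : 0 < #|Kset Gr b|%:R * t ^+ b by apply: mulr_gt0.
have pm : 0 < (1 + t) ^+ #|gE Gr| by apply: exprn_gt0.
have H2 : ln (#|Kset Gr b|%:R * t ^+ b) <= ln ((1 + t) ^+ #|gE Gr|).
  have hh := @ler_ln R.
  have k1 : #|Kset Gr b|%:R * t ^+ b \in Num.pos by [].
  have k2 : (1 + t) ^+ #|gE Gr| \in Num.pos by [].
  by rewrite (hh _ _ k1 k2).
have kp' : (#|Kset Gr b|%:R : R) \in Num.pos := kpos.
have tb' : t ^+ b \in Num.pos := tb.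
rewrite (lnM kp' tb') (lnXn _ t0) (lnXn _ t1p) in H2.
have l1 : ln (1 + t) <= t.
  by apply: le_ln1Dx; lra.
have l2 : #|gE Gr|%:R * ln (1 + t) <= #|gE Gr|%:R * t.
  apply: ler_wpM2l; [exact: ler0n | exact: l1].
rewrite -(mulr_natl (ln t) b) -(mulr_natl (ln (1 + t)) #|gE Gr|) in H2.
have h3 : ln (#|Kset Gr b|%:R : R) <= #|gE Gr|%:R * ln (1 + t) - b%:R * ln t.
  by rewrite lerBrDr.
rewrite mulrN; apply: (le_trans h3); rewrite lerD2r; exact: l2.
Qed.
Local Open Scope classical_set_scope.
Local Open Scope ring_scope.

Lemma ln_natM (R : realType) a b c : (0 < a)%N -> (0 < b)%N -> (0 < c)%N ->
  (a <= b * c)%N -> ln (a%:R : R) <= ln b%:R + ln c%:R.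
Proof.
move=> a0 b0 c0 abc.
have pa : (a%:R : R) \in Num.pos by rewrite posrE ltr0n.
have pb : (b%:R : R) \in Num.pos by rewrite posrE ltr0n.
have pc : (c%:R : R) \in Num.pos by rewrite posrE ltr0n.
have pbc : (b%:R * c%:R : R) \in Num.pos by rewrite posrE mulr_gt0.
by rewrite -(lnM pb pc) (ler_ln pa pbc) -natrM ler_nat.
Qed.

Unset Implicit Arguments.
Theorem corollary3p13 (Rt : realType) (G : nat -> graph)
  (S' : forall n, {set gV (G n)}) (F' : forall n, {set gE (G n)}) (h : Rt) :
  (forall n, connected_graph (G n)) ->
  tight Rt G ->
  (exists C : Rt, forall n,
      2 * (#|gE (G n)|%:R : Rt) / (#|gV (G n)|%:R) <= C) ->
  (fun n => ln ((tau [set: gV (G n)] [set: gE (G n)] : nat)%:R : Rt) / (#|gV (G n)|%:R))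
     @ \oo --> h ->
  (forall n, is_subgraph (S' n) (F' n)) ->
  (forall n, connected_sub (S' n) (F' n)) ->
  (fun n => (#|[set x in S' n | deg (F' n) x == deg [set: gE (G n)] x]|%:R : Rt)
              / (#|gV (G n)|%:R)) @ \oo --> (1 : Rt) ->
  (fun n => ln ((tau (S' n) (F' n))%:R : Rt) / (#|S' n|%:R)) @ \oo --> h.
Proof.
move=> cG _ [C hC] ha _ csub hg.
have Npos : forall n, (0 : Rt) < #|gV (G n)|%:R.
  move=> n; rewrite ltr0n; case: (cG n) => /set0Pn [x _] _.
  by apply/card_gt0P; exists x.
have Spos : forall n, (0 : Rt) < #|S' n|%:R.
  move=> n; rewrite ltr0n; case: (csub n) => /set0Pn [x xS] _.
  by apply/card_gt0P; exists x.
pose bb n := #|~: good (S' n) (F' n)|.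
pose KK n := #|Kset (G n) (bb n)|.
have Kp : forall n, (0 < KK n)%N.
  by move=> n; apply/card_gt0P; exists finset.set0; rewrite inE cards0.
have lK : forall n, (0 : Rt) <= ln (KK n)%:R.
  by move=> n; apply: ln_ge0; rewrite ler1n.
have bcvg : (fun n => (bb n)%:R / (#|gV (G n)|%:R : Rt)) @ \oo --> 0.
  suff E : (fun n => (bb n)%:R / (#|gV (G n)|%:R : Rt)) =
     (fun n => 1 - (#|[set x in S' n | deg (F' n) x == deg [set: gE (G n)] x]|%:R : Rt)
              / (#|gV (G n)|%:R)).
    rewrite E -(subrr (1 : Rt)); apply: cvgB; [exact: cvg_cst | exact: hg].
  apply/funext => n; rewrite /bb cardsCs finset.setCK natrB ?max_card //.
  by rewrite mulrBl (divff (lt0r_neq0 (Npos n))).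
have Lcvg : (fun n => ln ((KK n)%:R : Rt) / (#|gV (G n)|%:R : Rt)) @ \oo --> 0.
  apply/cvgrPdist_le => eps eps0.
  pose c : Rt := `|C| + 1.
  have c0 : 0 < c by rewrite /c ltr_wpDl ?normr_ge0 ?ltr01.
  pose t : Rt := Order.min 1 (eps / (2 * c)).
  have t0 : 0 < t by rewrite lt_min ltr01 /= divr_gt0 ?mulr_gt0 ?ltr0n.
  have t1 : t <= 1 by rewrite ge_min lexx.
  have tc : c * t <= eps / 2.
    have : t <= eps / (2 * c) by rewrite ge_min lexx orbT.
    rewrite -(ler_pM2l c0) => H; apply: (le_trans H); rewrite le_eqVlt; apply/orP; left.
    by apply/eqP; field; rewrite (lt0r_neq0 c0).
  pose q : Rt := - ln t.
  have q0 : 0 <= q by rewrite /q oppr_ge0 ln_le0.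
  pose dl : Rt := eps / (2 * (q + 1)).
  have q1 : 0 < q + 1 by rewrite ltr_wpDl ?ltr01.
  have dl0 : 0 < dl by rewrite divr_gt0 ?mulr_gt0 ?ltr0n.
  have dlq : dl * q <= eps / 2.
    have -> : eps / 2 = dl * (q + 1) by rewrite /dl; field; rewrite (lt0r_neq0 q1).
    by rewrite ler_pM2l // lerDl ler01.
  move/cvgrPdist_le: bcvg => /(_ dl dl0); apply: filterS => n.
  have bN0 : (0 : Rt) <= (bb n)%:R / #|gV (G n)|%:R.
    by apply: divr_ge0; [apply: ler0n | apply: ltW].
  rewrite sub0r normrN (ger0_norm bN0) => Hn.
  have LN0 : (0 : Rt) <= ln (KK n)%:R / #|gV (G n)|%:R.
    by apply: divr_ge0; [apply: lK | apply: ltW].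
  rewrite sub0r normrN (ger0_norm LN0).
  have lb := lnK_bound (G n) (bb n) t0 t1.
  have hm : (#|gE (G n)|%:R : Rt) / #|gV (G n)|%:R <= c.
    have := hC n; rewrite -mulrA.
    have := ler_norm C; rewrite /c.
    move: (#|gE (G n)|%:R / #|gV (G n)|%:R) => x.
    have := normr_ge0 C; lra.
  have iN : (0 : Rt) < #|gV (G n)|%:R^-1 by rewrite invr_gt0.
  have e1 : ln (KK n)%:R / #|gV (G n)|%:R <=
      (#|gE (G n)|%:R / #|gV (G n)|%:R) * t + ((bb n)%:R / #|gV (G n)|%:R) * q.
    rewrite mulrAC [X in _ <= _ + X]mulrAC -mulrDl.
    by rewrite ler_pM2r.
  have e2 : (#|gE (G n)|%:R / #|gV (G n)|%:R) * t <= c * t.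
    by rewrite ler_pM2r.
  have e3 : ((bb n)%:R / #|gV (G n)|%:R) * q <= dl * q.
    by apply: ler_wpM2r.
  move: e1 e2 e3 tc dlq.
  move: (ln (KK n)%:R / #|gV (G n)|%:R) ((#|gE (G n)|%:R / #|gV (G n)|%:R) * t)
    ((bb n)%:R / #|gV (G n)|%:R * q) (c * t) (dl * q) => a1 a2 a3 a4 a5.
  lra.
pose t0 n := tau [set: gV (G n)] [set: gE (G n)].
pose t1 n := tau (S' n) (F' n).
have t0p : forall n, (0 < t0 n)%N by move=> n; apply: tau_gt0; exact: cG.
have t1p : forall n, (0 < t1 n)%N by move=> n; apply: tau_gt0; exact: csub.
have lt0 : forall n, ln ((t0 n)%:R : Rt) <= ln (t1 n)%:R + 2 * ln (KK n)%:R.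
  move=> n; have KK2 : (0 < KK n * KK n)%N by rewrite muln_gt0 Kp.
  have := ln_natM Rt (t0p n) (t1p n) KK2 (lower_count (cG n) (csub n)).
  have pK : ((KK n)%:R : Rt) \in Num.pos by rewrite posrE ltr0n.
  rewrite natrM (lnM pK pK); lra.
have lt1 : forall n, ln ((t1 n)%:R : Rt) <= ln (t0 n)%:R + ln (KK n)%:R.
  move=> n; exact: (ln_natM Rt (t1p n) (t0p n) (Kp n) (upper_count (cG n) (csub n))).
have dcvg : (fun n => (ln ((t1 n)%:R : Rt) - ln (t0 n)%:R) / (#|gV (G n)|%:R : Rt)) @ \oo --> 0.
  apply/cvgrPdist_le => eps eps0.
  have e2 : 0 < eps / 2 by rewrite divr_gt0 ?ltr0n.
  move/cvgrPdist_le: Lcvg => /(_ _ e2); apply: filterS => n.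
  have LN0 : (0 : Rt) <= ln (KK n)%:R / #|gV (G n)|%:R.
    by apply: divr_ge0; [apply: lK | apply: ltW].
  rewrite sub0r normrN (ger0_norm LN0) => HL.
  rewrite sub0r normrN ler_norml.
  have w0 : (0 : Rt) <= #|gV (G n)|%:R^-1 by rewrite invr_ge0 ltW.
  have hD1 : ln ((t1 n)%:R : Rt) - ln (t0 n)%:R <= 2 * ln (KK n)%:R.
    have := lt1 n; have := lK n; lra.
  have hD2 : - (ln ((t1 n)%:R : Rt) - ln (t0 n)%:R) <= 2 * ln (KK n)%:R.
    have := lt0 n; lra.
  have a1 := ler_wpM2r w0 hD1; have a2 := ler_wpM2r w0 hD2.
  rewrite mulNr -mulrA in a2; rewrite -mulrA in a1.
  move: HL a1 a2; move: (ln (KK n)%:R / #|gV (G n)|%:R) 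
     ((ln ((t1 n)%:R : Rt) - ln (t0 n)%:R) / #|gV (G n)|%:R) => x y.
  lra.
have scvg : (fun n => (#|S' n|%:R : Rt) / #|gV (G n)|%:R) @ \oo --> (1 : Rt).
  apply/cvgrPdist_le => eps eps0; move/cvgrPdist_le: hg => /(_ eps eps0).
  apply: filterS => n.
  have sN : (#|S' n|%:R : Rt) / #|gV (G n)|%:R <= 1.
    by rewrite (ler_pdivrMr _ _ (Npos n)) mul1r ler_nat max_card.
  have w0 : (0 : Rt) <= #|gV (G n)|%:R^-1 by rewrite invr_ge0 ltW.
  have gs : (#|[set x in S' n | deg (F' n) x == deg [set: gE (G n)] x]|%:R : Rt)
      / #|gV (G n)|%:R <= #|S' n|%:R / #|gV (G n)|%:R.
    apply: (ler_wpM2r w0); rewrite ler_nat; apply: subset_leq_card.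
    by apply/subsetP => x; rewrite inE => /andP[].
  have g0 : (0 : Rt) <= 1 - #|[set x in S' n | deg (F' n) x == deg [set: gE (G n)] x]|%:R
      / #|gV (G n)|%:R by rewrite subr_ge0 (le_trans gs sN).
  have s0 : (0 : Rt) <= 1 - #|S' n|%:R / #|gV (G n)|%:R by rewrite subr_ge0.
  rewrite (ger0_norm g0) (ger0_norm s0).
  move: gs; move: (#|S' n|%:R / #|gV (G n)|%:R) (#|[set x in S' n | deg (F' n) x == deg [set: gE (G n)] x]|%:R
      / (#|gV (G n)|%:R : Rt)) => x y; lra.
have rcvg : (fun n => (#|gV (G n)|%:R : Rt) / #|S' n|%:R) @ \oo --> (1 : Rt).
  have := cvgV (oner_neq0 Rt) scvg; rewrite invr1.
  suff -> : (fun n => (#|gV (G n)|%:R : Rt) / #|S' n|%:R) =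
     (fun n => ((#|S' n|%:R : Rt) / #|gV (G n)|%:R)^-1) by move=> HH; exact: HH.
  by apply/funext => n; rewrite invf_div.
have H : (fun n => (ln ((t0 n)%:R : Rt) / #|gV (G n)|%:R +
     (ln ((t1 n)%:R : Rt) - ln (t0 n)%:R) / #|gV (G n)|%:R) *
     (#|gV (G n)|%:R / #|S' n|%:R)) @ \oo --> (h + 0) * 1.
  by apply: cvgM; [apply: cvgD|].
rewrite addr0 mulr1 /t0 /t1 in H.
suff -> : (fun n => ln ((tau (S' n) (F' n))%:R : Rt) / (#|S' n|%:R)) =
  (fun n => (ln ((tau [set: gV (G n)] [set: gE (G n)])%:R : Rt) / #|gV (G n)|%:R +
     (ln ((tau (S' n) (F' n))%:R : Rt) - ln (tau [set: gV (G n)] [set: gE (G n)])%:R)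
      / #|gV (G n)|%:R) * (#|gV (G n)|%:R / #|S' n|%:R)) by exact: H.
apply/funext => n.
have n1 := lt0r_neq0 (Npos n); have n2 := lt0r_neq0 (Spos n).
by rewrite -mulrDl addrC subrK mulrA (divfK n1).
Qed.
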